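(* Let $1\le j<n$ with $\gcd(n,j)=1$, $k=n-j$, let $a\in\overline L^\times$, and let $X\in\overline L$ satisfy $X^{q^k-1}=a$. Then the elements $g\in\overline L$ satisfying $$\frac{1}{a}\,g^{q^k}-\frac{1}{a^{q^j}}\,g-a^{q^n-1}+1=0$$ are exactly $$g=\frac{X^{q^n-1}+c}{X^{q^j-1}},\qquad c\in\mathbb{F}_{q^k},$$ and for such $g$ the element $h=-a^{q^n}+a+g^{q^k}$ equals $$h=\frac{X^{q^n-1}+c}{X^{q^n-q^k}}.$$
   Context: $q$ is a prime power and $\overline L$ is an algebraically closed field containing $\mathbb{F}_q$. *)

(* Defs.v *)
From HB Require Import structures.
From mathcomp Require Import all_boot all_order all_algebra all_field.
Set Implicit Arguments. Unset Strict Implicit. Unset Printing Implicit Defensive.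
Import GRing.Theory.
Local Open Scope ring_scope.

(* The subfield F_{q^m} of a field L containing F_q (with q a power of char L):
   the set of x with x^(q^m) = x. *)
Definition in_Fqm (L : fieldType) (q m : nat) (x : L) : bool :=
  x ^+ (q ^ m) == x.

(* Main.v *)
Require Import Defs.
From HB Require Import structures.
From mathcomp Require Import all_boot all_order all_algebra all_field.
From mathcomp Require Import ring.
Import GRing.Theory.
Local Open Scope ring_scope.

Theorem proposition4p2 (L : closedFieldType) (p e q : nat)
  (hp : prime p) (hchar : p \in [pchar L]) (he : (0 < e)%N) (hq : q = (p ^ e)%N)
  (n j k : nat) (hj1 : (1 <= j)%N) (hjn : (j < n)%N) (hcop : coprime n j)
  (hk : k = (n - j)%N)
  (a X : L) (ha : a != 0) (hX : X ^+ (q ^ k - 1) = a) :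
  (forall g : L,
     (a^-1 * g ^+ (q ^ k) - (a ^+ (q ^ j))^-1 * g - a ^+ (q ^ n - 1) + 1 = 0)
     <->
     (exists c : L, in_Fqm q k c /\
        g = (X ^+ (q ^ n - 1) + c) / X ^+ (q ^ j - 1)))
  /\
  (forall c : L, in_Fqm q k c ->
     let g := (X ^+ (q ^ n - 1) + c) / X ^+ (q ^ j - 1) in
     - a ^+ (q ^ n) + a + g ^+ (q ^ k) = (X ^+ (q ^ n - 1) + c) / X ^+ (q ^ n - q ^ k)).
Proof.
have q0 : (0 < q)%N by rewrite hq expn_gt0 prime_gt0.
have qp : forall m, (0 < q ^ m)%N by move=> m; rewrite expn_gt0 q0.
have pn : forall m, [pchar L].-nat (q ^ m)%N.
  move=> m; rewrite hq -expnM; rewrite pnatX (eq_pnat _ (pcharf_eq hchar)).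
  by rewrite pnat_id.
have Fadd : forall m (x y : L), (x + y) ^+ (q ^ m) = x ^+ (q ^ m) + y ^+ (q ^ m).
  by move=> m x y; apply: exprDn_pchar.
have Fopp : forall m (x : L), (- x) ^+ (q ^ m) = - x ^+ (q ^ m).
  by move=> m x; apply: exprNn_pchar.
have FF : forall m l (x : L), (x ^+ (q ^ l)) ^+ (q ^ m) = x ^+ (q ^ (l + m)).
  by move=> m l x; rewrite -exprM expnD.
have Fm1 : forall m (x : L), x != 0 -> x ^+ (q ^ m - 1) = x ^+ (q ^ m) / x.
  move=> m x x0; rewrite -{2}(subnK (qp m)) exprD expr1 mulfK //.
have k0 : (0 < k)%N by rewrite hk subn_gt0.
have nkj : (n = k + j)%N by rewrite hk subnK // ltnW.
have q1 : (1 < q)%N by rewrite hq -{1}(expn0 p) ltn_exp2l ?prime_gt1.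
have qk1 : (1 < q ^ k)%N by rewrite -{1}(expn0 q) ltn_exp2l.
have X0 : X != 0.
  apply/eqP => X0'; move: ha; rewrite -hX X0' expr0n.
  by rewrite subn_eq0 leqNgt qk1 eqxx.
have FX : forall m (x : L), x ^+ (q ^ m) = 0 -> x = 0.
  by move=> m x /eqP; rewrite expf_eq0 => /andP[_ /eqP].
have Fmul : forall m (x y : L), (x * y) ^+ (q ^ m) = x ^+ (q ^ m) * y ^+ (q ^ m).
  by move=> m x y; rewrite exprMn.
have Finv : forall m (x : L), (x ^-1) ^+ (q ^ m) = (x ^+ (q ^ m))^-1.
  by move=> m x; rewrite exprVn.
have Fneq : forall m, X ^+ (q ^ m) != 0 by move=> m; rewrite expf_neq0.
set uk := X ^+ (q ^ k). set uj := X ^+ (q ^ j). set un := X ^+ (q ^ n).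
set unk := X ^+ (q ^ (n + k)).
have ukn : uk ^+ (q ^ n) = unk by rewrite /uk FF addnC.
have unkk : un ^+ (q ^ k) = unk by rewrite /un FF.
have ujk : uj ^+ (q ^ k) = un by rewrite /uj FF addnC -nkj.
have ukj : uk ^+ (q ^ j) = un by rewrite /uk FF -nkj.
have Xk : X ^+ (q ^ k) = uk by [].
have aE : a = uk / X by rewrite -hX Fm1.
have ajE : a ^+ (q ^ j) = un / uj by rewrite aE Fmul Finv ukj.
have anE : a ^+ (q ^ n) = unk / un by rewrite aE Fmul Finv ukn.
have an1 : a ^+ (q ^ n - 1) = unk / un / a by rewrite Fm1 // anE.
have hn1 : X ^+ (q ^ n - 1) = un / X by rewrite Fm1.
have hj1' : X ^+ (q ^ j - 1) = uj / X by rewrite Fm1.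
have hnk : X ^+ (q ^ n - q ^ k) = un / uk.
  have le : (q ^ k <= q ^ n)%N by rewrite leq_exp2l // nkj leq_addr.
  have : X ^+ (q ^ n - q ^ k) * uk = un by rewrite /uk -exprD subnK.
  by move=> <-; rewrite mulfK // Fneq.
have uk0 : uk != 0 := Fneq k. have uj0 : uj != 0 := Fneq j.
have un0 : un != 0 := Fneq n.
have unk0 : unk != 0 := Fneq (n + k)%N.

have a0' : uk / X != 0 by rewrite -aE.
have gk : forall c, in_Fqm q k c ->
   ((un / X + c) / (uj / X)) ^+ (q ^ k) = (unk / uk + c) / (un / uk).
  move=> c /eqP hc; rewrite Fmul Finv Fadd !Fmul !Finv hc Xk ujk unkk //.
split.
  move=> g; split.
    move=> hg.
    have hgk : g ^+ (q ^ k) = a * ((a ^+ (q ^ j))^-1 * g + a ^+ (q ^ n - 1) - 1).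
      apply/eqP; rewrite -subr_eq0.
      have -> : g ^+ (q ^ k) - a * ((a ^+ (q ^ j))^-1 * g + a ^+ (q ^ n - 1) - 1)
        = a * (a^-1 * g ^+ (q ^ k) - (a ^+ (q ^ j))^-1 * g - a ^+ (q ^ n - 1) + 1)
        by field; rewrite expf_neq0.
      by rewrite hg mulr0.
    exists (g * (uj / X) - un / X); split; last first.
      by rewrite hn1 hj1'; field; rewrite X0 uj0.
    apply/eqP; rewrite Fadd Fopp !Fmul !Finv Xk ujk unkk hgk ajE an1 aE.
    by field; rewrite X0 uk0 un0 uj0.
  case=> c [hc ->].
  by rewrite hn1 hj1' gk // ajE an1 aE; field; rewrite X0 uk0 un0 uj0.
move=> c hc /=.
by rewrite hn1 hj1' gk // anE aE hnk; field; rewrite uk0 un0 X0.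
Qed.
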